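(* Let $(\Gamma,c)$ be a real Fuchsian group and $\gamma\in\Gamma$ an admissible element. Then the elliptic points of even order lying on $C_\gamma$ correspond bijectively to the elements of order two of $Z_\gamma$, where the point $z$ corresponds to $\sigma$ if $\sigma$ stabilizes $z$.
   Context: $\mathfrak{h}$ is the upper half-plane. A complex conjugation is an anti-holomorphic involution $c$ of $\mathfrak{h}$; for $\gamma\in\mathrm{PSL}_2(\mathbf{R})$, $\gamma^c=c\gamma c$. A real Fuchsian group is a pair $(\Gamma,c)$ with $\Gamma\subseteq\mathrm{PSL}_2(\mathbf{R})$ discrete, $c$ a complex conjugation, $\Gamma^c=\Gamma$, and $\mathfrak{h}^*/\Gamma$ compact, where $\mathfrak{h}^*$ is $\mathfrak{h}$ with the cusps of $\Gamma$ adjoined. $\gamma$ is admissible if $\gamma^c=\gamma^{-1}$; $C_\gamma=\{z\in\mathfrak{h}^*:\gamma z=cz\}$; $Z_\gamma=\{\sigma\in\Gamma:\sigma^c\gamma\sigma^{-1}=\gamma\}$. An elliptic point of even order is a point of $\mathfrak{h}$ whose stabilizer in $\Gamma$ is (finite cyclic) of even order. *)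

(* Defs.v *)
From HB Require Import structures.
From mathcomp Require Import all_boot all_order all_algebra.
From mathcomp Require Import reals complex.
From Stdlib Require List.
Set Implicit Arguments. Unset Strict Implicit. Unset Printing Implicit Defensive.
Import Order.TTheory GRing.Theory Num.Theory.
Local Open Scope ring_scope.
Local Open Scope complex_scope.

Section Fuchsian.
Variable R : realType.
Local Notation C := R[i].

Definition cabs (z : C) : R := Normc.normc z.

Definition inH (z : C) : Prop := 0 < complex.Im z.

(* Elements of PSL_2(R) are represented by matrices of SL_2(R); two matrices
   represent the same element of PSL_2(R) iff they agree up to sign. *)
Definition SL2 (A : 'M[R]_2) : Prop := \det A = 1.
Definition psl_eq (A B : 'M[R]_2) : Prop := A = B \/ A = - B.

Definition mob (A : 'M[R]_2) (z : C) : C :=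
  ((A 0 0)%:C * z + (A 0 1)%:C) / ((A 1 0)%:C * z + (A 1 1)%:C).

(* The projective real line P^1(R) = R u {oo}, oo represented by None,
   and the Moebius action on it. *)
Definition mobP (A : 'M[R]_2) (s : option R) : option R :=
  match s with
  | None => if A 1 0 == 0 then None else Some (A 0 0 / A 1 0)
  | Some x => if A 1 0 * x + A 1 1 == 0 then None
              else Some ((A 0 0 * x + A 0 1) / (A 1 0 * x + A 1 1))
  end.

(* A subgroup Gamma of PSL_2(R) is represented by its preimage Gt in SL_2(R),
   i.e. a subgroup of SL_2(R) containing -1. *)
Definition psl_subgroup (Gt : 'M[R]_2 -> Prop) : Prop :=
  [/\ forall A, Gt A -> SL2 A,
      Gt 1, Gt (-1),
      forall A B, Gt A -> Gt B -> Gt (A * B)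
    & forall A, Gt A -> Gt (A^-1)].

(* Discreteness of Gamma in PSL_2(R) (topology induced from the entrywise
   topology on SL_2(R)): every element is isolated. *)
Definition mx_close (A B : 'M[R]_2) (e : R) : Prop :=
  forall i j, `|A i j - B i j| < e.
Definition psl_discrete (Gt : 'M[R]_2 -> Prop) : Prop :=
  forall A, Gt A -> exists2 e : R, 0 < e &
    forall B, Gt B -> (mx_close B A e \/ mx_close B (- A) e) -> psl_eq B A.

Definition parabolic (Gt : 'M[R]_2 -> Prop) (A : 'M[R]_2) : Prop :=
  Gt A /\ ~ psl_eq A 1 /\ (\tr A) ^+ 2 = 4.
Definition cusp (Gt : 'M[R]_2 -> Prop) (s : option R) : Prop :=
  exists A, parabolic Gt A /\ mobP A s = s.

(* Points of h^* = h u {cusps}. *)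
Inductive hpt := Inner of C | Bdry of option R.

Definition inHstar (Gt : 'M[R]_2 -> Prop) (p : hpt) : Prop :=
  match p with Inner z => inH z | Bdry s => cusp Gt s end.

Definition act (A : 'M[R]_2) (p : hpt) : hpt :=
  match p with Inner z => Inner (mob A z) | Bdry s => Bdry (mobP A s) end.

Definition horoball (s : option R) (U : hpt -> Prop) : Prop :=
  match s with
  | None => exists2 K : R, 0 < K &
              forall w : C, K < complex.Im w -> U (Inner w)
  | Some x => exists2 r : R, 0 < r &
              forall w : C, cabs (w - (x +i* r)) < r -> U (Inner w)
  end.

Definition hstar_open (Gt : 'M[R]_2 -> Prop) (U : hpt -> Prop) : Prop :=
  [/\ forall p, U p -> inHstar Gt p,
      forall z, U (Inner z) -> exists2 e : R, 0 < e &
        forall w, cabs (w - z) < e -> inH w -> U (Inner w)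
    & forall s, U (Bdry s) -> horoball s U].

Definition gamma_invariant (Gt : 'M[R]_2 -> Prop) (U : hpt -> Prop) : Prop :=
  forall A p, Gt A -> U p -> U (act A p).

(* Compactness of the quotient h^*/Gamma: open sets of the quotient are the
   images of Gamma-invariant open subsets of h^*, so this says every cover of
   h^* by Gamma-invariant open sets has a finite subcover. *)
Definition quotient_compact (Gt : 'M[R]_2 -> Prop) : Prop :=
  forall F : (hpt -> Prop) -> Prop,
    (forall U, F U -> hstar_open Gt U /\ gamma_invariant Gt U) ->
    (forall p, inHstar Gt p -> exists2 U, F U & U p) ->
    exists s : seq (hpt -> Prop),
      (forall U, List.In U s -> F U) /\
      (forall p, inHstar Gt p -> exists2 U, List.In U s & U p).

Definition cdifferentiable (f : C -> C) (z : C) : Prop :=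
  exists l : C, forall e : R, 0 < e -> exists2 d : R, 0 < d &
    forall w : C, 0 < cabs (w - z) < d ->
      cabs ((f w - f z) / (w - z) - l) < e.

Definition complex_conjugation (c : C -> C) : Prop :=
  [/\ forall z, inH z -> inH (c z),
      forall z, inH z -> c (c z) = z
    & forall z, inH z -> cdifferentiable (fun w => (c w)^*) z].

Definition conj_stable (Gt : 'M[R]_2 -> Prop) (c : C -> C) : Prop :=
  (forall A, Gt A -> exists2 B, Gt B &
     forall z, inH z -> mob B z = c (mob A (c z))) /\
  (forall B, Gt B -> exists2 A, Gt A &
     forall z, inH z -> mob B z = c (mob A (c z))).

Definition real_fuchsian (Gt : 'M[R]_2 -> Prop) (c : C -> C) : Prop :=
  [/\ psl_subgroup Gt, psl_discrete Gt, complex_conjugation c,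
      conj_stable Gt c & quotient_compact Gt].

Definition admissible (Gt : 'M[R]_2 -> Prop) (c : C -> C) (g : 'M[R]_2) :=
  Gt g /\ forall z, inH z -> c (mob g (c z)) = mob (g^-1) z.

Definition on_Cgamma (c : C -> C) (g : 'M[R]_2) (z : C) : Prop :=
  inH z /\ mob g z = c z.

Definition inZgamma (Gt : 'M[R]_2 -> Prop) (c : C -> C) (g s : 'M[R]_2) :=
  Gt s /\ forall z, inH z -> c (mob s (c (mob g (mob (s^-1) z)))) = mob g z.

Definition order_two (s : 'M[R]_2) : Prop :=
  ~ psl_eq s 1 /\ psl_eq (s * s) 1.

(* The stabilizer of z in Gamma (a subset of PSL_2(R)) is finite of
   order n: the list l enumerates it without repetition modulo sign. *)
Definition stab_order (Gt : 'M[R]_2 -> Prop) (z : C) (n : nat) : Prop :=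
  exists l : seq 'M[R]_2,
    [/\ size l = n,
        forall A, List.In A l -> Gt A /\ mob A z = z,
        forall A, Gt A -> mob A z = z -> exists2 B, List.In B l & psl_eq A B
      & forall i j, (i < n)%N -> (j < n)%N ->
          psl_eq (nth 0 l i) (nth 0 l j) -> i = j].

Definition elliptic_even (Gt : 'M[R]_2 -> Prop) (z : C) : Prop :=
  inH z /\ exists n, stab_order Gt z n /\ ~~ odd n.

End Fuchsian.

(* Main.v *)
Require Import Defs.
From HB Require Import structures.
From mathcomp Require Import all_boot all_order all_algebra.
From mathcomp Require Import reals complex.
From mathcomp Require Import ring lra.
Import Order.TTheory GRing.Theory Num.Theory.
Local Open Scope ring_scope.
Local Open Scope complex_scope.
Set Implicit Arguments. Unset Strict Implicit.
Section S.
Variable R : realType.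
Local Notation C := R[i].

Lemma det22 (A : 'M[R]_2) : \det A = A 0 0 * A 1 1 - A 0 1 * A 1 0.
Proof.
rewrite (expand_det_row _ 0) !big_ord_recl big_ord0 /cofactor !det_mx11 !mxE /=.
have E0 : forall i : 'I_2, val i = 0%N -> i = 0 by move=> i h; apply/val_inj.
have E1 : forall i : 'I_2, val i = 1%N -> i = 1 by move=> i h; apply/val_inj.
rewrite (E0 ord0) // (E1 (lift 0 0)) // (E0 (lift 1 0)) // /bump /=.
by rewrite expr0 mul1r mulN1r addr0 mulrN.
Qed.

Lemma den_neq0 (A : 'M[R]_2) (x y : R) : \det A = 1 -> 0 < y ->
  (A 1 0)%:C * (x +i* y) + (A 1 1)%:C != 0.
Proof.
rewrite det22 => hd hy; rewrite -!complexr0; simpc.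
apply/negP => /eqP [h1 h2].
have c0 : A 1 0 = 0 by nra.
move: h1 hd; rewrite c0 mul0r add0r => ->; rewrite !mulr0 subr0 => /eqP; rewrite eq_sym oner_eq0.
by [].
Qed.

Lemma mob_eqE (A : 'M[R]_2) (x y : R) (u : C) : \det A = 1 -> 0 < y ->
  (mob A (x +i* y) = u <->
   (A 0 0)%:C * (x +i* y) + (A 0 1)%:C = u * ((A 1 0)%:C * (x +i* y) + (A 1 1)%:C)).
Proof.
move=> hd hy; have hn := @den_neq0 A x y hd hy; rewrite /mob; split.
  by move<-; rewrite divfK.
by move=> ->; rewrite mulfK.
Qed.

Lemma fixE (A : 'M[R]_2) (x y : R) : \det A = 1 -> 0 < y ->
  (mob A (x +i* y) = x +i* y <->
   (A 1 1 - A 0 0 = - (2 * A 1 0 * x) /\ A 0 1 = - (A 1 0 * (x ^+ 2 + y ^+ 2)))).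
Proof.
move=> hd hy; rewrite mob_eqE // -!complexr0; simpc; split.
  case=> h1 h2.
  have e1 : A 1 1 - A 0 0 = - (2 * A 1 0 * x) by nra.
  split=> //; nra.
by case=> h1 h2; congr (_ +i* _); nra.
Qed.

Lemma ord2 (i : 'I_2) : i = 0 \/ i = 1.
Proof. by case: i => [[|[|//]]] h; [left|right]; apply/val_inj. Qed.

Lemma mx2_ext (A B : 'M[R]_2) : A 0 0 = B 0 0 -> A 0 1 = B 0 1 -> A 1 0 = B 1 0 ->
  A 1 1 = B 1 1 -> A = B.
Proof.
move=> h1 h2 h3 h4; apply/matrixP => i j.
by case: (ord2 i) => ->; case: (ord2 j) => ->.
Qed.

Lemma mul22 (A B : 'M[R]_2) i j : (A * B) i j = A i 0 * B 0 j + A i 1 * B 1 j.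
Proof.
rewrite -mulmxE mxE !big_ord_recl big_ord0 addr0.
have h0 : (ord0 : 'I_2) = 0 by apply/val_inj.
have h1 : (lift ord0 ord0 : 'I_2) = 1 by apply/val_inj.
by rewrite h0 h1.
Qed.

Lemma one22 i j : (1 : 'M[R]_2) i j = (i == j)%:R.
Proof. by rewrite mxE. Qed.

Lemma opp22 (A : 'M[R]_2) i j : (- A) i j = - A i j.
Proof. by rewrite mxE. Qed.

Lemma sub22 (A B : 'M[R]_2) i j : (A - B) i j = A i j - B i j.
Proof. by rewrite !mxE. Qed.

Lemma add22 (A B : 'M[R]_2) i j : (A + B) i j = A i j + B i j.
Proof. by rewrite !mxE. Qed.

Lemma mob_eqW (A : 'M[R]_2) (w u : C) : \det A = 1 -> inH w ->
  (mob A w = u <->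
   (A 0 0)%:C * w + (A 0 1)%:C = u * ((A 1 0)%:C * w + (A 1 1)%:C)).
Proof. by case: w => x y hd hy; apply: mob_eqE. Qed.

Lemma mobH (A : 'M[R]_2) w : \det A = 1 -> inH w -> inH (mob A w).
Proof.
case: w => x y hd hy.
have := (@mob_eqE A x y (mob A (x +i* y)) hd hy).1 erefl.
case: (mob A (x +i* y)) => u v; rewrite /inH /= -!complexr0; simpc; case=> h1 h2.
move: hd hy; rewrite det22 /inH /= => hd hy.
set p := A 1 0 * x + A 1 1 in h1 h2 *; set q := A 1 0 * y in h1 h2 *.
have e2 : v * p = A 0 0 * y - u * q by rewrite h2; ring.
have e1 : v * q = u * p - (A 0 0 * x + A 0 1) by rewrite h1; ring.
have key : v * (p ^+ 2 + q ^+ 2) = y.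
  transitivity (p * (v * p) + q * (v * q)); first ring.
  rewrite e1 e2 -[y in RHS]mulr1 -hd /p /q; ring.
have hS : 0 <= p ^+ 2 + q ^+ 2 by nra.
nra.
Qed.

Lemma detM (A B : 'M[R]_2) : \det (A * B) = \det A * \det B.
Proof. by rewrite -mulmxE det_mulmx. Qed.

Lemma mob_mul (A B : 'M[R]_2) w : \det A = 1 -> \det B = 1 -> inH w ->
  mob (A * B) w = mob A (mob B w).
Proof.
move=> hA hB hw.
have hu := @mobH B w hB hw.
have eB := (@mob_eqW B w _ hB hw).1 erefl.
have eA := (@mob_eqW A (mob B w) _ hA hu).1 erefl.
set u := mob B w in eB eA hu *; set m := mob A u in eA *.
apply/(@mob_eqW (A * B) w m); first by rewrite detM hA hB mulr1.
  by [].
rewrite !mul22 !rmorphD !rmorphM.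
transitivity ((A 0 0)%:C * ((B 0 0)%:C * w + (B 0 1)%:C) +
              (A 0 1)%:C * ((B 1 0)%:C * w + (B 1 1)%:C)); first ring.
transitivity (m * ((A 1 0)%:C * ((B 0 0)%:C * w + (B 0 1)%:C) +
              (A 1 1)%:C * ((B 1 0)%:C * w + (B 1 1)%:C))); last ring.
rewrite eB.
transitivity (((A 0 0)%:C * u + (A 0 1)%:C) * ((B 1 0)%:C * w + (B 1 1)%:C)); first ring.
rewrite eA; ring.
Qed.

Lemma mobN (A : 'M[R]_2) w : mob (- A) w = mob A w.
Proof. by rewrite /mob !opp22 !rmorphN !mulNr -!opprD invrN mulrNN. Qed.

Lemma mob1 (w : C) : mob (1 : 'M[R]_2) w = w.
Proof. by rewrite /mob !one22 /= !rmorph1 !rmorph0 !mul1r !mul0r !addr0 add0r divr1. Qed.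

Lemma unit22 (A : 'M[R]_2) : \det A = 1 -> A \is a GRing.unit.
Proof. by move=> h; rewrite -[_ \is a _]/(A \in unitmx) unitmxE h unitr1. Qed.

Lemma invE (A B : 'M[R]_2) : A * B = 1 -> B * A = 1 -> A^-1 = B.
Proof.
move=> h1 h2; have u : A \is a GRing.unit by apply/unitrP; exists B.
by rewrite -[A^-1]mulr1 -h1 mulKr.
Qed.

Lemma inv22 (A : 'M[R]_2) : \det A = 1 ->
  [/\ A^-1 0 0 = A 1 1, A^-1 0 1 = - A 0 1, A^-1 1 0 = - A 1 0 & A^-1 1 1 = A 0 0].
Proof.
move=> hd; have u := unit22 hd; have h := mulrV u.
have e00 := congr1 (fun M : 'M[R]_2 => M 0 0) h.
have e01 := congr1 (fun M : 'M[R]_2 => M 0 1) h.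
have e10 := congr1 (fun M : 'M[R]_2 => M 1 0) h.
have e11 := congr1 (fun M : 'M[R]_2 => M 1 1) h.
move: e00 e01 e10 e11; rewrite /= !mul22 !one22 /= => e00 e01 e10 e11.
move: hd; rewrite det22 => hd.
set B := A^-1 in e00 e01 e10 e11 *.
split.
- transitivity (A 1 1 * (A 0 0 * B 0 0 + A 0 1 * B 1 0) - A 0 1 * (A 1 0 * B 0 0 + A 1 1 * B 1 0)).
    by rewrite -[LHS]mulr1 -hd; ring.
  by rewrite e00 e10; ring.
- transitivity (A 1 1 * (A 0 0 * B 0 1 + A 0 1 * B 1 1) - A 0 1 * (A 1 0 * B 0 1 + A 1 1 * B 1 1)).
    by rewrite -[LHS]mulr1 -hd; ring.
  by rewrite e01 e11; ring.
- transitivity (A 0 0 * (A 1 0 * B 0 0 + A 1 1 * B 1 0) - A 1 0 * (A 0 0 * B 0 0 + A 0 1 * B 1 0)).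
    by rewrite -[LHS]mulr1 -hd; ring.
  by rewrite e00 e10; ring.
- transitivity (A 0 0 * (A 1 0 * B 0 1 + A 1 1 * B 1 1) - A 1 0 * (A 0 0 * B 0 1 + A 0 1 * B 1 1)).
    by rewrite -[LHS]mulr1 -hd; ring.
  by rewrite e01 e11; ring.
Qed.

Lemma sq_eqs (s : 'M[R]_2) (k : R) : s * s = k%:M ->
  [/\ s 0 0 ^+ 2 + s 0 1 * s 1 0 = k, s 0 1 * (s 0 0 + s 1 1) = 0,
      s 1 0 * (s 0 0 + s 1 1) = 0 & s 1 1 ^+ 2 + s 0 1 * s 1 0 = k].
Proof.
move=> h.
have e00 := congr1 (fun M : 'M[R]_2 => M 0 0) h.
have e01 := congr1 (fun M : 'M[R]_2 => M 0 1) h.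
have e10 := congr1 (fun M : 'M[R]_2 => M 1 0) h.
have e11 := congr1 (fun M : 'M[R]_2 => M 1 1) h.
move: e00 e01 e10 e11; rewrite /= !mul22 !mxE /= => e00 e01 e10 e11.
split.
- by rewrite mulr1n in e00; rewrite -e00; ring.
- by rewrite mulr0n in e01; rewrite -e01; ring.
- by rewrite mulr0n in e10; rewrite -e10; ring.
- by rewrite mulr1n in e11; rewrite -e11; ring.
Qed.

Lemma sq1_pm (s : 'M[R]_2) : \det s = 1 -> s * s = 1 -> psl_eq s 1.
Proof.
rewrite det22 => hd h.
have [e1 e2 e3 e4] := sq_eqs (h : s * s = 1%:M).
clear h.
have [hs|hs] := eqVneq (s 0 0 + s 1 1) 0.
  have : s 1 1 = - s 0 0 by lra.
  move=> hd'; move: hd e1; rewrite hd' => hd e1; nra.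
have b0 : s 0 1 = 0 by move/eqP: e2; rewrite mulf_eq0 (negPf hs) orbF => /eqP.
have c0 : s 1 0 = 0 by move/eqP: e3; rewrite mulf_eq0 (negPf hs) orbF => /eqP.
move: e1 e4 hd; rewrite b0 c0 !mul0r !addr0 subr0 => e1 e4 hd.
have : (s 0 0 - 1) * (s 0 0 + 1) = 0 by nra.
move/eqP; rewrite mulf_eq0 => /orP [/eqP a1|/eqP a1].
  left; apply: mx2_ext; rewrite !one22 /= ?mulr1n ?mulr0n ?b0 ?c0 //; nra.
right; apply: mx2_ext; rewrite !opp22 !one22 /= ?mulr1n ?mulr0n ?b0 ?c0 ?oppr0 //; nra.
Qed.

Lemma sqm1_tr (s : 'M[R]_2) : s * s = -1 -> s 0 0 + s 1 1 = 0.
Proof.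
move=> h; have h' : s * s = (-1)%:M by rewrite h; apply/matrixP=> i j; rewrite !mxE mulNrn.
have [e1 e2 e3 e4] := sq_eqs h'.
clear h h'.
apply/eqP; apply/negPn/negP => hs.
have b0 : s 0 1 = 0 by move/eqP: e2; rewrite mulf_eq0 (negPf hs) orbF => /eqP.
move: e1; rewrite b0 mul0r addr0 => e1; nra.
Qed.

Lemma ord2_sq (s : 'M[R]_2) : \det s = 1 -> order_two s -> s * s = -1.
Proof.
move=> hd [h1 [h2|h2]] //; exfalso; exact: h1 (sq1_pm hd h2).
Qed.

Lemma inv_m1 (s : 'M[R]_2) : s * s = -1 -> s^-1 = - s.
Proof. by move=> h; apply: invE; rewrite ?mulrN ?mulNr h opprK. Qed.

Lemma stab_rel (A : 'M[R]_2) x y : \det A = 1 -> 0 < y -> mob A (x +i* y) = x +i* y ->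
  [/\ A 1 1 - A 0 0 = - (2 * A 1 0 * x), A 0 1 = - (A 1 0 * (x ^+ 2 + y ^+ 2))
    & (A 0 0 - A 1 0 * x) ^+ 2 + (A 1 0 * y) ^+ 2 = 1].
Proof.
move=> hd hy /(@fixE A x y hd hy) [e1 e2]; split=> //.
move: hd; rewrite det22 => hd.
have ed : A 1 1 = A 0 0 - 2 * A 1 0 * x by lra.
by rewrite -hd ed e2; ring.
Qed.

Lemma c_neq0 (s : 'M[R]_2) : \det s = 1 -> s * s = -1 -> s 1 0 != 0.
Proof.
move=> hd h; have ht := sqm1_tr h; clear h.
move: hd; rewrite det22 => hd; apply/eqP => c0; move: hd; rewrite c0 mulr0 subr0.
have -> : s 1 1 = - s 0 0 by lra.
nra.
Qed.

Lemma uniq_inv2 (s t : 'M[R]_2) x y : 0 < y -> \det s = 1 -> \det t = 1 ->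
  s * s = -1 -> t * t = -1 -> mob s (x +i* y) = x +i* y ->
  mob t (x +i* y) = x +i* y -> psl_eq t s.
Proof.
move=> hy hs ht ss tt fs ft.
have [s1 s2 s3] := stab_rel hs hy fs; have [t1 t2 t3] := stab_rel ht hy ft.
have trs := sqm1_tr ss; have trt := sqm1_tr tt; clear ss tt fs ft.
have as_ : s 0 0 = s 1 0 * x by lra.
have at_ : t 0 0 = t 1 0 * x by lra.
have ds : s 1 1 = - (s 1 0 * x) by lra.
have dt : t 1 1 = - (t 1 0 * x) by lra.
rewrite as_ in s3; rewrite at_ in t3.
have : (t 1 0 - s 1 0) * (t 1 0 + s 1 0) = 0.
  have e : y ^+ 2 * ((t 1 0 - s 1 0) * (t 1 0 + s 1 0)) = 0 by lra.
  move/eqP: e; rewrite mulf_eq0 expf_eq0 /= (gt_eqF hy) /= => /eqP //.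
move/eqP; rewrite mulf_eq0 => /orP [/eqP e|/eqP e].
  left; have ec : t 1 0 = s 1 0 by lra.
  by apply: mx2_ext; rewrite ?as_ ?at_ ?ds ?dt ?s2 ?t2 ec.
right; have ec : t 1 0 = - s 1 0 by lra.
apply: mx2_ext; rewrite !opp22 ?as_ ?at_ ?ds ?dt ?s2 ?t2 ec; ring.
Qed.

Lemma fix_unique (s : 'M[R]_2) (w w' : C) : \det s = 1 -> s * s = -1 ->
  inH w -> inH w' -> mob s w = w -> mob s w' = w' -> w = w'.
Proof.
case: w => x y; case: w' => x' y' hs ss hy hy' f f'.
have cn := c_neq0 hs ss; have tr := sqm1_tr ss; clear ss.
rewrite /inH /= in hy hy'.
have [e1 e2 _] := stab_rel hs hy f; have [e1' e2' _] := stab_rel hs hy' f'.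
have ex : x = x'.
  apply: (@mulfI _ (s 1 0)) => //; lra.
subst x'.
have ey : y ^+ 2 = y' ^+ 2.
  have : s 1 0 * (x ^+ 2 + y ^+ 2) = s 1 0 * (x ^+ 2 + y' ^+ 2) by lra.
  by move/(mulfI cn)/addrI.
have -> : y = y' by nra.
by [].
Qed.

Lemma fix_exists (s : 'M[R]_2) : \det s = 1 -> s * s = -1 ->
  exists w : C, inH w /\ mob s w = w.
Proof.
move=> hs ss; have cn := c_neq0 hs ss; have tr := sqm1_tr ss; clear ss.
exists ((s 0 0 / s 1 0) +i* (`|s 1 0|^-1)); split.
  by rewrite /inH /= invr_gt0 normr_gt0.
have hy : 0 < `|s 1 0|^-1 by rewrite invr_gt0 normr_gt0.
apply/(@fixE s _ _ hs hy).
have n2 : `|s 1 0|^-1 ^+ 2 = (s 1 0 ^+ 2)^-1 by rewrite exprVn real_normK ?num_real.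
move: hs; rewrite det22 => hs.
rewrite n2; split.
  have -> : s 1 1 = - s 0 0 by lra.
  by field.
have hb : s 0 1 = - (1 + s 0 0 ^+ 2) / s 1 0.
  have -> : s 0 1 = s 0 1 * s 1 0 / s 1 0 by field.
  have ed : s 1 1 = - s 0 0 by lra.
  have -> : s 0 1 * s 1 0 = - (1 + s 0 0 ^+ 2).
    by move: hs; rewrite ed => hs; lra.
  by [].
by rewrite hb; field.
Qed.

Lemma uniq_inv2W (s t : 'M[R]_2) (w : C) : inH w -> \det s = 1 -> \det t = 1 ->
  s * s = -1 -> t * t = -1 -> mob s w = w -> mob t w = w -> psl_eq t s.
Proof. by case: w => x y; apply: uniq_inv2. Qed.

Lemma psl_eqP (A B : 'M[R]_2) : reflect (psl_eq A B) ((A == B) || (A == -B)).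
Proof. apply: (iffP orP); [case=> /eqP ->; [by left|by right] | case=> ->; [left|right]; exact: eqxx]. Qed.

Lemma psl_refl (A : 'M[R]_2) : psl_eq A A.
Proof. by left. Qed.

Lemma psl_sym (A B : 'M[R]_2) : psl_eq A B -> psl_eq B A.
Proof. by case=> ->; [left|right; rewrite opprK]. Qed.

Lemma psl_trans (A B D : 'M[R]_2) : psl_eq A B -> psl_eq B D -> psl_eq A D.
Proof.
by case=> ->; case=> ->; rewrite ?opprK; [left|right|right|left].
Qed.

Lemma psl_mob (A B : 'M[R]_2) w : psl_eq A B -> mob A w = mob B w.
Proof. by case=> ->; rewrite ?mobN. Qed.

Lemma psl_inv (A B : 'M[R]_2) : psl_eq A B -> psl_eq A^-1 B^-1.
Proof. by case=> ->; [left|right; rewrite invrN]. Qed.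

Lemma psl_sq (A B : 'M[R]_2) : psl_eq A B -> A * A = B * B.
Proof. by case=> ->; rewrite ?mulrNN. Qed.

Lemma detV1 (A : 'M[R]_2) : \det A = 1 -> \det A^-1 = 1.
Proof.
move=> h; have := detM A A^-1; rewrite mulrV ?unit22 // det1 h mul1r.
by move<-.
Qed.

Lemma mobV (A : 'M[R]_2) w : \det A = 1 -> inH w -> mob A^-1 (mob A w) = w.
Proof.
move=> h hw; rewrite -mob_mul ?detV1 // mulVr ?unit22 //; exact: mob1.
Qed.

Lemma mobV_fix (A : 'M[R]_2) w : \det A = 1 -> inH w -> mob A w = w -> mob A^-1 w = w.
Proof. by move=> h hw e; rewrite -{1}e mobV. Qed.

Lemma In_nth (l : seq 'M[R]_2) B : List.In B l -> exists2 i, (i < size l)%N & nth 0 l i = B.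
Proof.
elim: l => [//|A l IH] /= [->|/IH [i hi e]]; first by exists 0%N.
by exists i.+1.
Qed.

Lemma nth_In (l : seq 'M[R]_2) i : (i < size l)%N -> List.In (nth 0 l i) l.
Proof.
elim: l i => [//|A l IH] [|i] /= hi; [by left|right; exact: IH].
Qed.
End S.

Lemma invol_odd n (f : 'I_n -> 'I_n) : involutive f ->
  odd n = odd #|[set i | f i == i]|.
Proof.
move=> fK.
set F := [set i | f i == i].
set L := [set i | (val i < val (f i))%N].
set G := [set i | (val (f i) < val i)%N].
have eC : ~: F = L :|: G.
  apply/setP => i; rewrite !inE -(inj_eq val_inj) neq_ltn orbC.
  by [].
have dLG : L :&: G = set0.
  apply/setP => i; rewrite !inE; apply/negP => /andP [h1 h2].
  by move: (ltn_trans h1 h2); rewrite ltnn.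
have eG : f @: L = G.
  apply/setP => i; rewrite inE; apply/imsetP/idP.
    by case=> j; rewrite inE => hj ->; rewrite fK.
  by move=> hi; exists (f i); rewrite ?inE fK.
have cG : #|G| = #|L| by rewrite -eG card_imset //; exact: inv_inj.
have := cardsC F; rewrite eC cardsU dLG cards0 subn0 cG => e.
rewrite -{1}(card_ord n) -e.
by rewrite oddD addnn odd_double addbF.
Qed.

From Stdlib Require Import Classical.

Section T.
Variable R : realType.
Local Notation C := R[i].

Lemma psl_sq1 (A : 'M[R]_2) : \det A = 1 -> (psl_eq (A * A) 1 <-> psl_eq A^-1 A).
Proof.
move=> hd; have u := unit22 hd; split.
  case=> h; first by left; apply: invE.
  by right; rewrite (inv_m1 h).
case=> h; first by left; rewrite -{1}h mulVr.
right; rewrite -{1}(opprK A) -h mulNr mulVr //.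
Qed.

Lemma stab_parity (Gt : 'M[R]_2 -> Prop) (z : C) n :
  psl_subgroup Gt -> inH z -> stab_order Gt z n ->
  (odd n <-> ~ (exists s, [/\ Gt s, mob s z = z & order_two s])).
Proof.
move=> [hSL h1 hm1 hM hV] hz [l [hsz hin hcov huniq]].
pose L (i : 'I_n) := nth 0 l i.
have hLi : forall i : 'I_n, Gt (L i) /\ mob (L i) z = z.
  by move=> i; apply: hin; apply: nth_In; rewrite hsz.
have hd : forall i : 'I_n, \det (L i) = 1 by move=> i; apply: hSL; case: (hLi i).
have huniq' : forall i j : 'I_n, psl_eq (L i) (L j) -> i = j.
  move=> i j h; apply: val_inj; exact: huniq (ltn_ord i) (ltn_ord j) h.
have hcov' : forall A, Gt A -> mob A z = z -> exists j : 'I_n, psl_eq A (L j).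
  move=> A GA FA; have [B hB e] := hcov _ GA FA.
  have [j hj eB] := In_nth hB; rewrite hsz in hj.
  by exists (Ordinal hj); rewrite /L /= eB.
have ex_inv : forall i : 'I_n, exists j : 'I_n, psl_eq (L i)^-1 (L j).
  move=> i; have [G1 F1] := hLi i.
  exact: hcov' _ (hV _ G1) (mobV_fix (hd i) hz F1).
pose pe := fun A B : 'M[R]_2 => (A == B) || (A == -B).
pose f := fun i : 'I_n => odflt i [pick j : 'I_n | pe (L i)^-1 (L j)].
have fP : forall i, psl_eq (L i)^-1 (L (f i)).
  move=> i; rewrite /f; case: pickP => [j /psl_eqP //|h].
  by exfalso; have [j /psl_eqP hj] := ex_inv i; move: (h j); rewrite /pe hj.
have fK : involutive f.
  move=> i; apply: huniq'.
  have e1 := fP (f i); have e2 := psl_inv (fP i); rewrite invrK in e2.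
  exact: psl_sym (psl_trans e2 e1).
have fixE' : forall i, f i = i <-> psl_eq (L i * L i) 1.
  move=> i; split.
    move=> e; apply/(psl_sq1 (hd i)); by rewrite -{2}e.
  move/(psl_sq1 (hd i)) => e; apply: huniq'; apply: psl_sym; exact: psl_trans (psl_sym e) (fP i).
have [i1 hi1] := hcov' 1 h1 (mob1 z).
have eq1 : forall i, psl_eq (L i) 1 -> i = i1.
  by move=> i h; apply: huniq'; apply: psl_trans h hi1.
have fix1 : f i1 = i1.
  apply/fixE'; have := psl_sq (psl_sym hi1); rewrite mulr1 => <-; exact: psl_refl.
rewrite (invol_odd fK).
have [E|NE] := classic (exists s, [/\ Gt s, mob s z = z & order_two s]).
  case: E => s [Gs Fs Os]; have ds := hSL _ Gs; have ss := ord2_sq ds Os.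
  have [js his] := hcov' s Gs Fs.
  have eqs : forall i, order_two (L i) -> i = js.
    move=> i Oi; apply: huniq'; apply: psl_trans (his).
    apply: (uniq_inv2W hz ds (hd i) ss (ord2_sq (hd i) Oi) Fs); by case: (hLi i).
  have ne : i1 != js.
    apply/eqP => e; case: Os => Os _; apply: Os.
    by apply: psl_trans his _; rewrite -e; exact: psl_sym hi1.
  have -> : [set i | f i == i] = [set i1; js].
    apply/setP => i; rewrite !inE; apply/idP/idP.
      move/eqP/fixE' => h.
      have [h'|h'] := classic (psl_eq (L i) 1); first by rewrite (eq1 _ h') eqxx.
      by rewrite (eqs i) ?eqxx ?orbT //; split.
    case/orP => /eqP ->; first exact/eqP.
    apply/eqP/fixE'.
    by rewrite -(psl_sq his) ss; right.
  rewrite cards2 ne /=; split=> // H; exfalso; apply: H; by exists s.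
have -> : [set i | f i == i] = [set i1].
  apply/setP => i; rewrite !inE; apply/idP/idP; last by move/eqP ->; apply/eqP.
  move/eqP/fixE' => h.
  have [h'|h'] := classic (psl_eq (L i) 1); first by rewrite (eq1 _ h') eqxx.
  by exfalso; apply: NE; exists (L i); case: (hLi i) => ? ?; split.
by rewrite cards1.
Qed.
End T.

Section U.
Variable R : realType.
Local Notation C := R[i].
Definition Mb (x y : R) := 2 + (x / y) ^+ 2 + y^-1 + (x ^+ 2 + y ^+ 2) / y.

Lemma entry_bound (a b c d x y : R) : 0 < y ->
  d - a = - (2 * c * x) -> b = - (c * (x ^+ 2 + y ^+ 2)) ->
  (a - c * x) ^+ 2 + (c * y) ^+ 2 = 1 ->
  [/\ `|a| <= Mb x y, `|b| <= Mb x y, `|c| <= Mb x y & `|d| <= Mb x y].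
Proof.
move=> hy e1 e2 e3.
set r := y^-1.
have hr : 0 < r by rewrite invr_gt0.
have ry : r * y = 1 by rewrite mulVf // gt_eqF.
set u := a - c * x in e3; set v := c * y in e3.
have hu : -1 <= u <= 1 by apply/andP; split; nra.
have hv : -1 <= v <= 1 by apply/andP; split; nra.
case/andP: hu => hu1 hu2; case/andP: hv => hv1 hv2.
have ec : c = v * r by rewrite /v /r; field; rewrite gt_eqF.
set k := x / y.
have ek : k = x * r by [].
have ea : a = u + v * k by rewrite /u /v /k; field; rewrite gt_eqF.
have vk : v * k = c * x by rewrite /v /k; field; rewrite gt_eqF.
have ed : d = u - v * k by lra.
set s := (x ^+ 2 + y ^+ 2) / y.
have hs : 0 <= s by rewrite /s divr_ge0 // ?ltW //; nra.
have eb : b = - (v * s) by rewrite e2 /v /s; field; rewrite gt_eqF.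
have hvk : -(1 + k ^+ 2) <= v * k <= 1 + k ^+ 2 by apply/andP; split; nra.
case/andP: hvk => hvk1 hvk2.
rewrite /Mb -/k -/r -/s.
split; rewrite ler_norml; apply/andP; split.
- rewrite ea; nra.
- rewrite ea; nra.
- rewrite eb; nra.
- rewrite eb; nra.
- rewrite ec; nra.
- rewrite ec; nra.
- rewrite ed; nra.
- rewrite ed; nra.
Qed.
End U.

Import Num.Def.

Lemma max_nat (P : nat -> Prop) B : P 0%N -> (forall m, P m -> (m <= B)%N) ->
  exists m, P m /\ forall m', P m' -> (m' <= m)%N.
Proof.
move=> P0 hB.
have H : forall i, exists m, P m /\ forall m', P m' -> (m' <= i)%N -> (m' <= m)%N.
  elim=> [|i [m [Pm hm]]]; first by exists 0%N; split=> // m' _.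
  have [Pi|nPi] := classic (P i.+1); first by exists i.+1; split.
  exists m; split=> // m' Pm'; rewrite leq_eqVlt => /orP [/eqP e|]; first by subst.
  by rewrite ltnS; apply: hm.
have [m [Pm hm]] := H B; exists m; split=> // m' Pm'; apply: hm => //; exact: hB.
Qed.

Section V.
Variable R : realType.
Local Notation C := R[i].

Lemma trunc_close (p q M : R) (N : nat) : 0 <= p + M -> 0 <= q + M ->
  truncn (N%:R * (p + M)) = truncn (N%:R * (q + M)) -> N%:R * `|p - q| < 1.
Proof.
move=> hp hq e.
have hX : 0 <= N%:R * (p + M) by rewrite mulr_ge0.
have hY : 0 <= N%:R * (q + M) by rewrite mulr_ge0.
have /andP [x1 x2] := truncn_itv hX; have /andP [y1 y2] := truncn_itv hY.
rewrite e in x1 x2; rewrite -natr1 in x2 y2.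
have -> : N%:R * `|p - q| = `|N%:R * (p + M) - N%:R * (q + M)|.
  by rewrite -mulrBr normrM normr_nat; congr (_ * `|_|); ring.
rewrite ltr_norml; apply/andP; split; lra.
Qed.


Lemma stab_exists (Gt : 'M[R]_2 -> Prop) (z : C) :
  psl_subgroup Gt -> psl_discrete Gt -> inH z -> exists n, stab_order Gt z n.
Proof.
case: z => x y [hSL h1 hm1 hM hV] hD hy; rewrite /inH /= in hy.
set z := x +i* y.
have [e he hdisc] := hD 1 h1.
set M := Mb x y.
have bnd : forall A, Gt A -> mob A z = z -> forall i j, `|A i j| <= M.
  move=> A GA FA; have [s1 s2 s3] := stab_rel (hSL _ GA) hy FA.
  have [b1 b2 b3 b4] := entry_bound hy s1 s2 s3.
  by move=> i j; case: (ord2 i) => ->; case: (ord2 j) => ->.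
have hM0 : 0 <= M by have := bnd 1 h1 (mob1 _) 0 0; exact: le_trans (normr_ge0 _).
pose N := (truncn (2 * M / e)).+1.
have hN : 2 * M < N%:R * e.
  by have := truncnS_gt (2 * M / e); rewrite ltr_pdivrMr.
have hN0 : 0 < N%:R :> R by rewrite ltr0n.
pose K := truncn (N%:R * (2 * M)).
pose key (A : 'M[R]_2) : {ffun 'I_2 * 'I_2 -> 'I_K.+1} :=
  [ffun p => inord (truncn (N%:R * (A p.1 p.2 + M)))].
have keyb : forall A, Gt A -> mob A z = z -> forall i j,
    (truncn (N%:R * (A i j + M)) < K.+1)%N.
  move=> A GA FA i j; rewrite ltnS; apply: le_truncn; rewrite ler_pM2l //.
  by have := bnd A GA FA i j; rewrite ler_norml => /andP [_ h]; lra.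
have keyE : forall A B, Gt A -> mob A z = z -> Gt B -> mob B z = z ->
    key A = key B -> psl_eq A B.
  move=> A B GA FA GB FB hk.
  have cl : forall i j, N%:R * `|A i j - B i j| < 1.
    move=> i j; have := congr1 (fun f : {ffun 'I_2 * 'I_2 -> 'I_K.+1} => val (f (i, j))) hk.
    rewrite /key !ffunE /= !inordK ?keyb //.
    apply: trunc_close.
      by have := bnd A GA FA i j; rewrite ler_norml => /andP [h _]; lra.
    by have := bnd B GB FB i j; rewrite ler_norml => /andP [h _]; lra.
  have dB := hSL _ GB.
  have GC : Gt (A * B^-1) by apply: hM => //; exact: hV.
  have uB := unit22 dB.
  have eC : A * B^-1 - 1 = (A - B) * B^-1 by rewrite mulrBl mulrV.
  have bB : forall k j, `|B^-1 k j| <= M.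
    have [i00 i01 i10 i11] := inv22 dB.
    move=> k j; case: (ord2 k) => ->; case: (ord2 j) => ->;
      rewrite ?i00 ?i01 ?i10 ?i11 ?normrN; exact: bnd.
  have close : mx_close (A * B^-1) 1 e.
    move=> i j; rewrite -sub22 eC mul22 !sub22.
    apply: (le_lt_trans (ler_normD _ _)); rewrite !normrM.
    have c0 := cl i 0; have c1 := cl i 1; have q0 := bB 0 j; have q1 := bB 1 j.
    set P0 := `|A i 0 - B i 0| in c0 *; set P1 := `|A i 1 - B i 1| in c1 *.
    set Q0 := `|B^-1 0 j| in q0 *; set Q1 := `|B^-1 1 j| in q1 *.
    have p0 : 0 <= P0 by exact: normr_ge0. have p1 : 0 <= P1 by exact: normr_ge0.
    have r0 : 0 <= Q0 by exact: normr_ge0. have r1 : 0 <= Q1 by exact: normr_ge0.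
    have h0 : N%:R * (P0 * Q0) <= M by nra.
    have h1' : N%:R * (P1 * Q1) <= M by nra.
    rewrite -(ltr_pM2l hN0); lra.
  have := hdisc _ GC (or_introl close); case=> hC.
    by left; rewrite -[A](divrK uB) hC mul1r.
  by right; rewrite -[A](divrK uB) hC mulN1r.
have sizeb : forall l : seq 'M[R]_2,
    (forall A, List.In A l -> Gt A /\ mob A z = z) ->
    (forall i j, (i < size l)%N -> (j < size l)%N ->
       psl_eq (nth 0 l i) (nth 0 l j) -> i = j) ->
    (size l <= #|{ffun 'I_2 * 'I_2 -> 'I_K.+1}|)%N.
  move=> l hin hu.
  pose g (i : 'I_(size l)) := key (nth 0 l i).
  have gi : injective g.
    move=> i j hg; apply: val_inj; apply: hu; rewrite ?ltn_ord //.
    have [Gi Fi] := hin _ (nth_In (ltn_ord i)).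
    have [Gj Fj] := hin _ (nth_In (ltn_ord j)).
    exact: keyE _ _ Gi Fi Gj Fj hg.
  by rewrite -{1}(card_ord (size l)); apply: leq_card gi.
pose P m := exists l : seq 'M[R]_2, size l = m /\
  ((forall A, List.In A l -> Gt A /\ mob A z = z) /\
   (forall i j, (i < size l)%N -> (j < size l)%N ->
       psl_eq (nth 0 l i) (nth 0 l j) -> i = j)).
have P0 : P 0%N by exists [::]; split=> //; split=> // i j.
have PB : forall m, P m -> (m <= #|{ffun 'I_2 * 'I_2 -> 'I_K.+1}|)%N.
  by move=> m [l [<- [hin hu]]]; apply: sizeb.
have [m [[l [hl [hin hu]]] hmax]] := max_nat P0 PB.
exists m; exists l; split=> //; last by rewrite -hl.
move=> A GA FA; apply: NNPP => hno.
have : P m.+1.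
  exists (A :: l); split; first by rewrite /= hl.
  split.
    by move=> A' /= [<-|h]; [split | exact: hin].
  move=> [|i] [|j] //= hi hj h.
  - by exfalso; apply: hno; exists (nth 0 l j) => //; apply: nth_In.
  - exfalso; apply: hno; exists (nth 0 l i); first exact: nth_In.
    exact: psl_sym.
  - by congr S; apply: hu.
by move/hmax; rewrite ltnn.
Qed.
End V.

Lemma id_psl (R : realType) (A : 'M[R]_2) : \det A = 1 ->
  (forall w, inH w -> mob A w = w) -> psl_eq A 1.
Proof.
move=> hd hA.
have y1 : (0 : R) < 1 by [].
have y2 : (0 : R) < 2 by [].
have [e1 e2 _] := stab_rel hd y1 (hA (0 +i* 1) y1).
have [e1' e2' _] := stab_rel hd y2 (hA (0 +i* 2) y2).
have c0 : A 1 0 = 0 by move: e2 e2'; rewrite !expr0n /= => ->; lra.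
have b0 : A 0 1 = 0 by rewrite e2 c0 mul0r oppr0.
have ea : A 1 1 = A 0 0 by move: e1; rewrite !mulr0 oppr0 => /eqP; rewrite subr_eq0 => /eqP.
move: hd; rewrite det22 b0 c0 ea mulr0 subr0 => hd.
have : (A 0 0 - 1) * (A 0 0 + 1) = 0 by nra.
move/eqP; rewrite mulf_eq0 => /orP [/eqP a1|/eqP a1].
  left; apply: mx2_ext; rewrite !one22 /= ?mulr1n ?mulr0n ?b0 ?c0 ?ea //; lra.
right; apply: mx2_ext; rewrite !opp22 !one22 /= ?mulr1n ?mulr0n ?b0 ?c0 ?ea ?oppr0 //; lra.
Qed.

Unset Implicit Arguments.

Theorem lemma3p7 (R : realType) (Gt : 'M[R]_2 -> Prop) (c : R[i] -> R[i])
    (g : 'M[R]_2) :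
  real_fuchsian Gt c -> admissible Gt c g ->
  (forall z : R[i], elliptic_even Gt z -> on_Cgamma c g z ->
     exists s : 'M[R]_2,
       [/\ inZgamma Gt c g s, order_two s, mob s z = z &
           forall t, inZgamma Gt c g t -> order_two t -> mob t z = z ->
             psl_eq t s]) /\
  (forall s : 'M[R]_2, inZgamma Gt c g s -> order_two s ->
     exists z : R[i],
       [/\ elliptic_even Gt z, on_Cgamma c g z, mob s z = z &
           forall w, elliptic_even Gt w -> on_Cgamma c g w -> mob s w = w ->
             w = z]).
Proof.
move=> [hG hD hc hcs _] [Gg _].
have [hSL h1 hm1 hM hV] := hG.
have [cH cc _] := hc.
have dg : \det g = 1 := hSL _ Gg.
split.
- move=> z [hz [n [hst hev]]] [_ hgz].
  have [s [Gs Fs Os]] : exists s, [/\ Gt s, mob s z = z & order_two s].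
    apply: NNPP => hno; have := (stab_parity hG hz hst).2 hno.
    by move: hev => /negP.
  have ds : \det s = 1 := hSL _ Gs.
  have ss := ord2_sq ds Os.
  have [B GB hB] := hcs.1 s Gs.
  have dB : \det B = 1 := hSL _ GB.
  have Bw : forall w, inH w -> inH (mob B w).
    by move=> w hw; rewrite hB //; apply: (cH); apply: mobH => //; apply: (cH).
  have BB : B * B = -1.
    have idB : forall w, inH w -> mob (B * B) w = w.
      move=> w hw.
      have hcw := cH _ hw.
      have h2 : inH (mob s (c w)) := mobH ds hcw.
      have h3 : inH (c (mob s (c w))) := cH _ h2.
      by rewrite mob_mul // (hB w hw) (hB _ h3) cc // -mob_mul // ss mobN mob1 cc.
    have dBB : \det (B * B) = 1 by rewrite detM dB mulr1.
    case: (id_psl dBB idB) => [hB1|//].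
    exfalso; case: Os => Os1 _; apply: Os1; apply: id_psl => // u hu.
    have pB := sq1_pm dB hB1.
    have e := hB (c u) (cH _ hu); rewrite cc // (psl_mob _ pB) mob1 in e.
    transitivity (c (c (mob s u))); first by rewrite cc //; apply: mobH.
    by rewrite -e cc.
  have ug := unit22 dg.
  have dgi : \det g^-1 = 1 := detV1 dg.
  pose K := g * s * g^-1.
  have dK : \det K = 1 by rewrite /K !detM dg ds dgi !mul1r.
  have KK : K * K = -1.
    rewrite /K !mulrA divrK // -(mulrA g s s) ss mulrN1 mulNr divrr //.
  have hgzH : inH (mob g z) := mobH dg hz.
  have FK : mob K (mob g z) = mob g z.
    by rewrite /K mob_mul ?dgi ?detM ?dg ?ds ?mulr1 // mobV // mob_mul // Fs.
  have FB : mob B (mob g z) = mob g z.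
    rewrite hgz hB; last exact: cH.
    by rewrite cc // Fs.
  have pBK : psl_eq B K := uniq_inv2W hgzH dK dB KK BB FK FB.
  exists s; split => //.
  + split => // w hw.
    have hsw : inH (mob s^-1 w) by apply: mobH => //; exact: detV1.
    have hu : inH (mob g (mob s^-1 w)) := mobH dg hsw.
    rewrite -hB // (psl_mob _ pBK) /K mob_mul ?dgi ?detM ?dg ?ds ?mulr1 //.
    rewrite mobV // mob_mul // -(mob_mul ds) ?detV1 // mulrV ?unit22 // mob1.
    by [].
  + move=> t [Gt_ _] Ot Ft.
    have dt : \det t = 1 := hSL _ Gt_.
    exact: uniq_inv2W hz ds dt ss (ord2_sq dt Ot) Fs Ft.
- move=> s [Gs hZ] Os.
  have ds : \det s = 1 := hSL _ Gs.
  have ss := ord2_sq ds Os.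
  have [w [hw Fw]] := fix_exists ds ss.
  have ellw : forall w', inH w' -> mob s w' = w' -> elliptic_even Gt w'.
    move=> w' hw' Fw'; split => //.
    have [n hn] := stab_exists hG hD hw'.
    exists n; split => //; apply/negP => hodd.
    by apply: ((stab_parity hG hw' hn).1 hodd); exists s.
  have onC : forall w', inH w' -> mob s w' = w' -> on_Cgamma c g w'.
    move=> w' hw' Fw'; split => //.
    have hgw : inH (mob g w') := mobH dg hw'.
    set v := c (mob g w').
    have hv : inH v := cH _ hgw.
    have e := hZ w' hw'; rewrite (mobV_fix ds hw' Fw') -/v in e.
    have hsv : inH (mob s v) := mobH ds hv.
    have Fv : mob s v = v by rewrite -[mob s v]cc // e.
    have ev : v = w' := fix_unique ds ss hv hw' Fv Fw'.
    by transitivity (c v); [rewrite /v cc | rewrite ev].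
  exists w; split => //.
  + exact: ellw.
  + exact: onC.
  + by move=> w' [hw' _] _ Fw'; apply: (fix_unique ds ss hw' hw Fw' Fw).
Qed.
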